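(* Let $G$ be a finite $p$-group and let $C_1, C_2,\ldots,C_p$ be proper subgroups of $G$ such that $C_1\neq C_2$ and $|G:C_1|=|G:C_2|=p$. Then there exists a normal subgroup $C$ of $G$ such that $|G:C|=p$, $C\cap C_1=C\cap C_2=C_1\cap C_2$, and $C\not\subseteq C_i$ for all $1\leq i\leq p$. *)

(* Defs.v *)
From mathcomp Require Import all_boot all_fingroup all_solvable.

(* Main.v *)
Require Import Defs.
From mathcomp Require Import all_boot all_fingroup all_solvable.
From mathcomp Require Import zify.

Lemma L1 {gT : finGroupType} {G C : {group gT}} {p} {g : gT} :
  prime p -> (C <| G)%g -> #|G : C|%g = p -> g \in G -> g \notin C ->
  forall k, ((g ^+ k)%g \in C) = (p %| k).
Proof.
move=> pr nCG iC gG gC k.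
have nC := normal_norm nCG.
have gN : g \in 'N(C)%g by apply: (subsetP nC).
have cG : coset C g \in (G / C)%g := mem_quotient C gG.
have ho : #[coset C g]%g = p.
  have := order_dvdG cG; rewrite card_quotient // iC.
  case/primeP: pr => _ /[apply] /orP [/eqP|/eqP //].
  move/eqP; rewrite order_eq1 => /eqP c1.
  by rewrite (coset_idr gN c1) in gC.
rewrite -ho order_dvdn -morphX //.
apply/idP/idP => [h|/eqP h].
  apply/eqP; exact: coset_id.
by apply: coset_idr => //; rewrite groupX.
Qed.

Lemma L2 {gT : finGroupType} {G C A : {group gT}} {p} :
  prime p -> (C <| G)%g -> #|G : C|%g = p -> A \subset G -> ~~ (A \subset C) ->
  #|A| = p * #|A :&: C|.
Proof.
move=> pr nCG iC sAG nAC.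
have sCG := normal_sub nCG.
have mC : maximal C G by apply: p_index_maximal => //; rewrite iC.
have nAC' : A \subset 'N(C)%g := subset_trans sAG (normal_norm nCG).
have eJ : ((A <*> C)%g :=: G).
  apply/eqP; rewrite eqEsubset join_subG sAG sCG /=.
  apply/negPn/negP => hn.
  have pr' : (A <*> C)%G \proper G by rewrite properEneq join_subG sAG sCG andbT
     eqEsubset join_subG sAG sCG /= hn.
  have := (maxgroupP mC).2 _ pr' (joing_subr A C) => eq1.
  move: nAC; rewrite -eq1 /=; by rewrite joing_subl.
have := mul_cardG A C; rewrite -norm_joinEl // eJ -(Lagrange sCG) iC.
have := cardG_gt0 C; nia.
Qed.

Lemma card_bigcup_le (T I : finType) (P : pred I) (F : I -> {set T}) :
  #|\bigcup_(i | P i) F i| <= \sum_(i | P i) #|F i|.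
Proof.
elim/big_rec2: _ => [|]; first by rewrite cards0.
move=> i A n _ IH; rewrite cardsU; lia.
Qed.

Lemma sum_gt2 c n : \sum_(i < n | 2 < i) c = (n - 3) * c.
Proof.
elim: n => [|n IH]; first by rewrite big_ord0.
rewrite big_mkcond big_ord_recr /= -big_mkcond IH.
case: (ltnP 2 n) => h; nia.
Qed.

Lemma arith p n : 1 < p -> 0 < n ->
  ~ (p * p * n - (p * n + p * n - n) <= (p.+1 - 3) * ((p - 1) * n)).
Proof. move=> *; nia. Qed.

Theorem lemma4 (p : nat) (gT : finGroupType) (G : {group gT})
    (C : nat -> {group gT}) :
  prime p -> (p.-group G)%g ->
  (forall i, 1 <= i <= p -> C i \proper G) ->
  C 1 != C 2 :> {set gT} ->
  #|G : C 1%N|%g = p -> #|G : C 2%N|%g = p ->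
  exists D : {group gT},
    [/\ (D <| G)%g, #|G : D|%g = p,
        D :&: C 1 = C 1 :&: C 2, D :&: C 2 = C 1 :&: C 2 &
        forall i, 1 <= i <= p -> ~~ (D \subset C i)].
Proof.
move=> pr pG hC ne12 i1 i2.
have p1 : 1 < p by apply: prime_gt1.
have sC1 : C 1 \subset G by apply: proper_sub; apply: hC; lia.
have sC2 : C 2 \subset G by apply: proper_sub; apply: hC; lia.
have nC1 : (C 1%N <| G)%g.
  by apply: (p_maximal_normal pG); apply: p_index_maximal; rewrite ?i1.
have nC2 : (C 2%N <| G)%g.
  by apply: (p_maximal_normal pG); apply: p_index_maximal; rewrite ?i2.
have cG1 := Lagrange sC1; rewrite i1 in cG1.
have cG2 := Lagrange sC2; rewrite i2 in cG2.
have n21 : ~~ (C 2 \subset C 1).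
  apply/negP => h.
  have e : C 2 == C 1 :> {set gT}.
    by rewrite eqEcard h /= -(leq_pmul2r (prime_gt0 pr)) cG1 cG2.
  by rewrite (eqP e) eqxx in ne12.
set N := (C 1%N :&: C 2%N)%G.
have cN : #|C 2| = p * #|N| by rewrite (L2 pr nC1 i1 sC2 n21) setIC.
have nN : (N <| G)%g := normalI nC1 nC2.
set S := G :\: (C 1 :|: C 2).
have cS : #|S| = p * p * #|N| - (p * #|N| + p * #|N| - #|N|).
  rewrite cardsD (setIidPr _) ?subUset ?sC1 ?sC2 // cardsU.
  have : #|C 1| = #|C 2|.
    by apply/eqP; rewrite -(eqn_pmul2r (prime_gt0 pr)) cG1 cG2.
  move=> e; rewrite e -cG2 cN (_ : #|C 1 :&: C 2| = #|N|) //; nia.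
have inS : forall g, g \in S -> [/\ g \in G, g \notin C 1 & g \notin C 2].
  by move=> g; rewrite !inE negb_or => /andP[/andP[-> ->] ->].
pose D g := (N <*> <[g]>)%G.
have DE : forall g, g \in G -> D g = (N * <[g]>)%g :> {set gT}.
  move=> g gG; rewrite /= norm_joinEr // cycle_subG.
  exact: (subsetP (normal_norm nN)).
have DI : forall g, g \in S -> forall x, x \in D g -> (x \in C 1) || (x \in C 2) -> x \in N.
  move=> g /inS[gG g1 g2] x; rewrite DE //.
  case/mulsgP => n y nN' /cycleP[k yk] -> {x}.
  have h1 : (y \in C 1) = (p %| k) by rewrite yk; exact: (L1 pr nC1 i1 gG g1).
  have h2 : (y \in C 2) = (p %| k) by rewrite yk; exact: (L1 pr nC2 i2 gG g2).
  move: nN'; rewrite inE => /andP[n1 n2].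
  move=> hx; have pk : p %| k.
    case/orP: hx => hx; [rewrite -h1 | rewrite -h2]; move: hx; rewrite groupMl //.
  rewrite inE; apply/andP; split; apply: groupM => //.
    by rewrite -h1 in pk.
  by rewrite -h2 in pk.
have NsD : forall g, N \subset D g by move=> g; apply: joing_subl.
have gD : forall g, g \in D g by move=> g; rewrite /= mem_gen // inE cycle_id orbT.
have DI1 : forall g, g \in S -> D g :&: C 1 = N.
  move=> g gS; apply/eqP; rewrite eqEsubset; apply/andP; split.
    by apply/subsetP => x /setIP[xD x1]; apply: (DI g gS) => //; rewrite x1.
  by rewrite subsetI NsD /=; exact: subsetIl.
have DI2 : forall g, g \in S -> D g :&: C 2 = N.
  move=> g gS; apply/eqP; rewrite eqEsubset; apply/andP; split.
    by apply/subsetP => x /setIP[xD x2]; apply: (DI g gS) => //; rewrite x2 orbT.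
  by rewrite subsetI NsD /=; exact: subsetIr.
have sDG : forall g, g \in G -> D g \subset G.
  by move=> g gG; rewrite join_subG cycle_subG gG (subset_trans (subsetIl _ _) sC1).
have cD : forall g, g \in S -> #|D g| = p * #|N|.
  move=> g gS; have [gG g1 _] := inS g gS.
  rewrite (L2 pr nC1 i1 (sDG g gG)) ?DI1 //.
  by apply/negP => /subsetP /(_ g (gD g)); apply/negP.
have iD : forall g, g \in S -> #|G : D g|%g = p.
  move=> g gS; have [gG _ _] := inS g gS.
  have := Lagrange (sDG g gG); rewrite cD // -cG2 cN.
  have := cardG_gt0 N; have := prime_gt0 pr.
  move: (#|G : D g|%g) (#|N|) => a b; nia.
have mD : forall g, g \in S -> maximal (D g) G.
  move=> g gS; have [gG _ _] := inS g gS.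
  by apply: p_index_maximal; rewrite ?sDG ?iD.
case: (boolP [exists g in S, [forall i : 'I_p.+1, (0 < i) ==> ~~ (D g \subset C i)]]).
  case/exists_inP => g gS /forallP H.
  exists (D g); split.
  - by apply: (p_maximal_normal pG); apply: mD.
  - exact: iD.
  - exact: DI1.
  - exact: DI2.
  move=> i /andP[i0 ip]; exact: (implyP (H (Ordinal (ip : i < p.+1))) i0).
rewrite negb_exists_in => /forall_inP H'.
have good : forall g, g \in S -> exists2 i : 'I_p.+1, 2 < i &
    (g \in C i :&: S) && (#|C i :&: S| <= (p - 1) * #|N|).
  move=> g gS; have [gG g1 g2] := inS g gS.
  move: (H' g gS); rewrite negb_forall => /existsP[i].
  rewrite negb_imply negbK => /andP[i0 sub].
  have iP : C i \proper G by apply: hC; rewrite i0 -ltnS ltn_ord.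
  have e := (maxgroupP (mD g gS)).2 (C i) iP sub.
  have gi : g \in C i by rewrite e gD.
  exists i.
    have ni1 : nat_of_ord i != 1 by apply/eqP => e1; move: gi; rewrite e1 => gi; rewrite gi in g1.
    have ni2 : nat_of_ord i != 2 by apply/eqP => e1; move: gi; rewrite e1 => gi; rewrite gi in g2.
    by move: (nat_of_ord i) i0 ni1 ni2 => [|[|[|k]]].
  rewrite inE gi gS /= e setIDA (setIidPl (sDG g gG)) cardsD setIUr DI1 // DI2 //.
  by rewrite setUid cD // mulnBl mul1n.
have cover : S \subset \bigcup_(i : 'I_p.+1 | (2 < i) && (#|C i :&: S| <= (p - 1) * #|N|)) (C i :&: S).
  apply/subsetP => g gS; have [i i2' /andP[gi gd]] := good g gS.
  by apply/bigcupP; exists i; rewrite ?i2' ?gd.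
have := leq_trans (subset_leq_card cover) (card_bigcup_le _ _ _ _).
rewrite big_mkcondr /=.
have le : \sum_(i < p.+1 | 2 < i)
    (if #|C i :&: S| <= (p - 1) * #|N| then #|C i :&: S| else 0) <=
    \sum_(i < p.+1 | 2 < i) ((p - 1) * #|N|).
  by apply: leq_sum => i _; case: ifP.
move/leq_trans/(_ le); rewrite sum_gt2 cS.
move=> h; exfalso; apply: (arith _ _ p1 (cardG_gt0 N)); exact: h.
Qed.
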